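(* Let $\mathcal{E}$ be a quantum channel on $\mathbb{C}^d$, $M \ge 2$ and $N \ge 2$ integers. Let $\hat V_1,\dots,\hat V_M$ be i.i.d. from a unitary $4$-design on $\mathbb{C}^d$, $|\psi_i\rangle = \hat V_i|0\rangle$, $f_i := f_{\mathcal{E}}(\psi_i)$, and, conditional on $\psi_i$, let $X_{i,1},\dots,X_{i,N}\in\{0,1\}$ be i.i.d. Bernoulli($f_i$), with the data for different $i$ independent. Let $\hat F = \frac{1}{MN}\sum_{i=1}^M\sum_{s=1}^N X_{i,s}$. Then for every $\epsilon > 0$, $$\Pr\bigl[|\hat F - F| \ge \epsilon\bigr] \le \frac{D^2}{M\epsilon^2} + \frac{1}{4MN\epsilon^2}.$$ In particular, for any $\delta\in(0,1)$, if $\frac{D^2}{M} + \frac{1}{4MN} \le \delta\epsilon^2$, then $\Pr\bigl[|\hat F - F| \le \epsilon\bigr] \ge 1-\delta$.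
   Context: $f_{\mathcal{E}}(\psi) := \langle\psi|\mathcal{E}(|\psi\rangle\langle\psi|)|\psi\rangle$. With $d\psi$ the Haar-induced probability measure on unit vectors of $\mathbb{C}^d$, $F := \int d\psi\, f_{\mathcal{E}}(\psi)$ and $D^2 := \int d\psi\, f_{\mathcal{E}}(\psi)^2 - F^2$. $|0\rangle$ is a fixed unit vector. A unitary $t$-design is a probability distribution on $U(d)$ such that for all $k\le t$ and all operators $\hat O$ on $(\mathbb{C}^d)^{\otimes k}$, $\mathbb{E}[\hat V^{\otimes k}\hat O\hat V^{\dagger\otimes k}] = \int \hat U^{\otimes k}\hat O\hat U^{\dagger\otimes k}\,d\hat U$ with $d\hat U$ the Haar measure. *)

(* Defs.v *)
From HB Require Import structures.
From mathcomp Require Import all_boot all_order all_algebra.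
From mathcomp Require Import all_classical all_reals all_analysis.
From mathcomp Require Import complex mxtens.

Set Implicit Arguments.
Unset Strict Implicit.
Unset Printing Implicit Defensive.

Import Order.TTheory GRing.Theory Num.Theory.
Import numFieldTopology.Exports numFieldNormedType.Exports.
Local Open Scope classical_set_scope.
Local Open Scope ring_scope.

Section QDefs.
Variable R : realType.
Local Notation C := R[i].

Definition mxdag m n (A : 'M[C]_(m, n)) : 'M[C]_(n, m) :=
  (map_mx (@conjc R) A)^T.

Definition unit_vector n (z : 'cV[C]_n) : Prop := (mxdag z *m z) 0 0 = 1.

Definition is_channel d (E : 'M[C]_d -> 'M[C]_d) : Prop :=
  exists (K : nat) (A : 'I_K -> 'M[C]_d),
    (forall rho, E rho = \sum_(k < K) (A k *m rho *m mxdag (A k))) /\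
    \sum_(k < K) (mxdag (A k) *m A k) = 1%:M.

(* f_E(psi) = <psi| E(|psi><psi|) |psi>  (a real number for a channel;
   we take its real part) *)
Definition fE d (E : 'M[C]_d -> 'M[C]_d) (psi : 'cV[C]_d) : R :=
  complex.Re ((mxdag psi *m E (psi *m mxdag psi) *m psi) 0 0).

Definition remb m n (A : 'M[C]_(m, n)) : 'M[R]_(m, n + n) :=
  row_mx (map_mx (@complex.Re R) A) (map_mx (@complex.Im R) A).

(* Borel sigma-algebra on real matrices (= on complex matrices via remb) *)
Definition mxborel m n : set (set 'M[R]_(m, n)) := <<s @open (matrix R m n) >>.

Section RandomMatrices.
Context {dT : measure_display} {T : measurableType dT}.

Definition rmeas m n (Y : T -> 'M[C]_(m, n)) : Prop :=
  forall B, mxborel B -> measurable ((fun w => remb (Y w)) @^-1` B).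

Definition sigmaY m n (Y : T -> 'M[C]_(m, n)) : set (set T) :=
  [set (fun w => remb (Y w)) @^-1` B | B in @mxborel m (n + n)].

Definition same_law (P : probability T R) m n (Y1 Y2 : T -> 'M[C]_(m, n)) :=
  forall B, mxborel B ->
    P ((fun w => remb (Y1 w)) @^-1` B) = P ((fun w => remb (Y2 w)) @^-1` B).

Definition mutually_independent (I : finType) (P : probability T R)
    (G : I -> set (set T)) : Prop :=
  forall A : I -> set T, (forall i, G i (A i)) ->
    P (\bigcap_(i in [set: I]) A i) = (\prod_(i : I) P (A i))%E.

(* conditionally on the sigma-algebra Gs, X_1..X_N are i.i.d. Bernoulli(f) *)
Definition cond_iid_bernoulli (P : probability T R) (Gs : set (set T))
    (f : T -> R) N (X : 'I_N -> T -> bool) : Prop :=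
  forall B, Gs B -> forall x : {ffun 'I_N -> bool},
    P (B `&` [set w | forall s, X s w = x s]) =
    (\int[P]_(w in B) (\prod_(s < N) (if x s then f w else 1 - f w))%:E)%E.
End RandomMatrices.

(* W : T' -> U(d) is Haar distributed under Q: values in U(d), Borel
   measurable, and its law is left-invariant (the Haar probability measure
   is the unique left-invariant probability measure on U(d)). *)
Definition haar_rv {dQ : measure_display} {T' : measurableType dQ}
    (Q : probability T' R) d (W : T' -> 'M[C]_d) : Prop :=
  (forall w, W w \is unitarymx) /\ rmeas W /\
  forall A : 'M[C]_d, A \is unitarymx -> forall B, mxborel B ->
    Q ((fun w => remb (A *m W w)) @^-1` B) = Q ((fun w => remb (W w)) @^-1` B).

(* the law of V (under P) is a unitary t-design, i.e. for every k <= t and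
   every operator O on (C^d)^{(x)k}, E[V^{(x)k} O V^{dag (x)k}] equals the
   Haar average (computed with a Haar-distributed W under Q); the matrix
   expectation is taken entrywise (real and imaginary parts). *)
Definition unitary_design (t : nat)
    {dT : measure_display} {T : measurableType dT} (P : probability T R)
    {dQ : measure_display} {T' : measurableType dQ} (Q : probability T' R)
    d (V : T -> 'M[C]_d) (W : T' -> 'M[C]_d) : Prop :=
  forall k, (k <= t)%N -> forall (O : 'M[C]_(d ^ k)) (a b : 'I_(d ^ k)),
    (\int[P]_x (complex.Re ((V x ^t k *m O *m (mxdag (V x)) ^t k) a b))%:E =
     \int[Q]_y (complex.Re ((W y ^t k *m O *m (mxdag (W y)) ^t k) a b))%:E)%E /\
    (\int[P]_x (complex.Im ((V x ^t k *m O *m (mxdag (V x)) ^t k) a b))%:E =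
     \int[Q]_y (complex.Im ((W y ^t k *m O *m (mxdag (W y)) ^t k) a b))%:E)%E.

End QDefs.

(* Main.v *)
Require Import Defs.
From HB Require Import structures.
From mathcomp Require Import all_boot all_order all_algebra.
From mathcomp Require Import all_classical all_reals all_analysis.
From mathcomp Require Import complex mxtens.
From mathcomp Require Import lra ring spectral.
Set Implicit Arguments.
Unset Strict Implicit.
Unset Printing Implicit Defensive.
Import Order.TTheory GRing.Theory Num.Theory.
Import numFieldTopology.Exports numFieldNormedType.Exports.
Local Open Scope classical_set_scope.
Local Open Scope ring_scope.
Section S.
Variable R : realType.
Local Notation C := R[i].
Lemma entry_open m n (p : 'I_m) (j : 'I_n) (O : set R) :
  open O -> open [set M : 'M[R]_(m, n) | O (M p j)].
Proof.
move=> oO; rewrite openE => M /= OM.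
exists (fun i k => if (i == p) && (k == j) then O else setT).
  move=> i k; case: ifP => [/andP[/eqP -> /eqP ->]|_]; last exact: filterT.
  by move: oO; rewrite openE; apply.
move=> N /= HN; have := HN p j; by rewrite !eqxx.
Qed.

Lemma rmeas_entry {dT : measure_display} {T : measurableType dT} m n
  (Y : T -> 'M[C]_(m, n)) : rmeas Y -> forall p q,
  measurable_fun setT (fun w => complex.Re (Y w p q)) /\
  measurable_fun setT (fun w => complex.Im (Y w p q)).
Proof.
move=> hY p q.
have H (j : 'I_(n + n)) : measurable_fun setT (fun w => remb (Y w) p j).
  apply: (measurability _ (measurable_realfun.RGenOpens.measurableE R)).
  move=> _ [_ [x [y ->]] <-]; rewrite setTI.
  apply: (hY [set M : 'M[R]_(m, n + n) | `]x, y[%classic (M p j)]).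
  apply: sub_sigma_algebra; apply: entry_open; exact: interval_open.
split.
  have := H (lshift n q); apply: eq_measurable_fun => w _.
  by rewrite /remb row_mxEl mxE.
have := H (rshift n q); apply: eq_measurable_fun => w _.
by rewrite /remb row_mxEr mxE.
Qed.
End S.
Section Good.
Variable R : realType.
Local Notation C := R[i].
Context {dT : measure_display} {T : measurableType dT}.

Definition rgood (f : T -> R) :=
  measurable_fun setT f /\ exists c : R, forall w, `|f w| <= c.
Definition cgood (g : T -> C) :=
  rgood (fun w => complex.Re (g w)) /\ rgood (fun w => complex.Im (g w)).

Lemma ReM (x y : C) : complex.Re (x * y) = complex.Re x * complex.Re y - complex.Im x * complex.Im y.
Proof. by case: x => a b; case: y => c e. Qed.
Lemma ImM (x y : C) : complex.Im (x * y) = complex.Re x * complex.Im y + complex.Im x * complex.Re y.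
Proof. by case: x => a b; case: y => c e. Qed.
Lemma ReJ (x : C) : complex.Re (conjc x) = complex.Re x.
Proof. by case: x. Qed.
Lemma ImJ (x : C) : complex.Im (conjc x) = - complex.Im x.
Proof. by case: x. Qed.

Lemma rgood_cst (a : R) : rgood (fun _ => a).
Proof. split; first exact: measurable_cst. by exists `|a|. Qed.

Lemma rgoodD f g : rgood f -> rgood g -> rgood (fun w => f w + g w).
Proof.
move=> [mf [a ha]] [mg [b hb]]; split; first exact: measurable_realfun.measurable_funD.
exists (a + b) => w; apply: le_trans (ler_normD _ _) _; exact: lerD.
Qed.

Lemma rgoodN f : rgood f -> rgood (fun w => - f w).
Proof.
move=> [mf [a ha]]; split; first exact: measurableT_comp.
by exists a => w; rewrite normrN.
Qed.

Lemma rgoodM f g : rgood f -> rgood (fun w => g w) -> rgood (fun w => f w * g w).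
Proof.
move=> [mf [a ha]] [mg [b hb]]; split; first exact: measurable_realfun.measurable_funM.
exists (a * b) => w; rewrite normrM; apply: ler_pM => //.
Qed.

Lemma rgood_sum (I : Type) (s : seq I) (F : I -> T -> R) :
  (forall i, rgood (F i)) -> rgood (fun w => \sum_(i <- s) F i w).
Proof.
move=> H; elim: s => [|x s IH].
  by under eq_fun do rewrite big_nil; exact: rgood_cst.
under eq_fun do rewrite big_cons; exact: rgoodD.
Qed.

Lemma cgood_cst (a : C) : cgood (fun _ => a).
Proof. split; exact: rgood_cst. Qed.

Lemma cgoodD f g : cgood f -> cgood g -> cgood (fun w => f w + g w).
Proof.
move=> [f1 f2] [g1 g2]; split.
  by under eq_fun do rewrite raddfD /=; exact: rgoodD.
by under eq_fun do rewrite raddfD /=; exact: rgoodD.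
Qed.

Lemma cgoodM f g : cgood f -> cgood g -> cgood (fun w => f w * g w).
Proof.
move=> [f1 f2] [g1 g2]; split.
  under eq_fun do rewrite ReM.
  apply: rgoodD; [exact: rgoodM | apply: rgoodN; exact: rgoodM].
under eq_fun do rewrite ImM.
apply: rgoodD; exact: rgoodM.
Qed.

Lemma cgoodJ f : cgood f -> cgood (fun w => conjc (f w)).
Proof.
move=> [f1 f2]; split.
  by under eq_fun do rewrite ReJ.
by under eq_fun do rewrite ImJ; exact: rgoodN.
Qed.

Lemma cgood_sum (I : Type) (s : seq I) (F : I -> T -> C) :
  (forall i, cgood (F i)) -> cgood (fun w => \sum_(i <- s) F i w).
Proof.
move=> H; elim: s => [|x s IH].
  by under eq_fun do rewrite big_nil; exact: cgood_cst.
under eq_fun do rewrite big_cons; exact: cgoodD.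
Qed.

Lemma rgood_int (P : probability T R) f : rgood f -> P.-integrable setT (EFin \o f).
Proof.
move=> [mf [c hc]]; apply: measurable_bounded_integrable => //.
  by apply: (le_lt_trans (probability_le1 P measurableT)); exact: ltry.
exists c; split; first exact: num_real.
move=> x xc y _ /=; apply: le_trans (hc y) _; exact: ltW.
Qed.

Lemma rgood_prod (I : Type) (s : seq I) (F : I -> T -> R) :
  (forall i, rgood (F i)) -> rgood (fun w => \prod_(i <- s) F i w).
Proof.
move=> H; elim: s => [|x s IH].
  by under eq_fun do rewrite big_nil; exact: rgood_cst.
under eq_fun do rewrite big_cons; exact: rgoodM.
Qed.

Lemma rgoodB f g : rgood f -> rgood g -> rgood (fun w => f w - g w).
Proof. move=> hf hg; apply: rgoodD => //; exact: rgoodN. Qed.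

End Good.
Section Unit.
Variable R : realType.
Local Notation C := R[i].

Lemma mulcJ_Re (x : C) : complex.Re (x * conjc x) = complex.Re x ^+ 2 + complex.Im x ^+ 2.
Proof. case: x => a b /=. by rewrite !expr2 mulrN opprK. Qed.

Lemma unitary_entry_bound d (X : 'M[C]_d) : X \is unitarymx -> forall p q,
  `|complex.Re (X p q)| <= 1 /\ `|complex.Im (X p q)| <= 1.
Proof.
move=> /unitarymxP H p q.
have := congr1 (fun M : 'M[C]_d => complex.Re (M p p)) H.
rewrite /= !mxE eqxx /= raddf_sum /=.
under eq_bigr do rewrite !mxE /= mulcJ_Re.
rewrite (bigD1 q) //= => Hs.
have h0 : 0 <= \sum_(i < d | i != q) (complex.Re (X p i) ^+ 2 + complex.Im (X p i) ^+ 2).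
  by apply: sumr_ge0 => i _; rewrite addr_ge0 // sqr_ge0.
set a := complex.Re (X p q) in Hs *; set b := complex.Im (X p q) in Hs *.
have ha : a ^+ 2 <= 1 by rewrite -Hs; have := sqr_ge0 b; lra.
have hb : b ^+ 2 <= 1 by rewrite -Hs; have := sqr_ge0 a; lra.
by split; rewrite ler_norml; apply/andP; split; nra.
Qed.
End Unit.
Section Mt.
Variable R : realType.
Local Notation C := R[i].
Context {dT : measure_display} {T : measurableType dT} (P : probability T R).
Context {dT' : measure_display} {T' : measurableType dT'} (Q : probability T' R).

Lemma RintD (mu : probability T R) (f g : T -> R) : rgood f -> rgood g ->
  Rintegral mu setT (fun w => f w + g w) = Rintegral mu setT f + Rintegral mu setT g.
Proof. by move=> hf hg; apply: RintegralD => //; exact: rgood_int. Qed.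

Lemma RintB (mu : probability T R) (f g : T -> R) : rgood f -> rgood g ->
  Rintegral mu setT (fun w => f w - g w) = Rintegral mu setT f - Rintegral mu setT g.
Proof. by move=> hf hg; apply: RintegralB => //; exact: rgood_int. Qed.

Lemma RintZ (mu : probability T R) (c : R) (f : T -> R) : rgood f ->
  Rintegral mu setT (fun w => c * f w) = c * Rintegral mu setT f.
Proof. by move=> hf; apply: RintegralZl => //; exact: rgood_int. Qed.

Lemma Rintc (mu : probability T R) (c : R) :
  Rintegral mu setT (fun w => c) = c.
Proof. rewrite Rintegral_cst //. have := probability_setT mu. move=> /= ->. by rewrite mulr1. Qed.

Lemma Rint_sum (mu : probability T R) (I : Type) (s : seq I) (F : I -> T -> R) :
  (forall i, rgood (F i)) ->
  Rintegral mu setT (fun w => \sum_(i <- s) F i w) = \sum_(i <- s) Rintegral mu setT (F i).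
Proof.
move=> H; elim: s => [|x s IH].
  by under eq_fun do rewrite big_nil; rewrite Rintc big_nil.
under eq_fun do rewrite big_cons; rewrite big_cons RintD //; last exact: rgood_sum.
by rewrite IH.
Qed.
End Mt.

Section Mt2.
Variable R : realType.
Local Notation C := R[i].
Context {dT : measure_display} {T : measurableType dT} (P : probability T R).
Context {dT' : measure_display} {T' : measurableType dT'} (Q : probability T' R).

Definition Mt (g : T -> C) (h : T' -> C) :=
  [/\ cgood g, cgood h,
   Rintegral P setT (fun w => complex.Re (g w)) = Rintegral Q setT (fun y => complex.Re (h y)) &
   Rintegral P setT (fun w => complex.Im (g w)) = Rintegral Q setT (fun y => complex.Im (h y))].

Lemma Mt_eq g h g' h' : (forall w, g w = g' w) -> (forall y, h y = h' y) -> Mt g h -> Mt g' h'.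
Proof.
move=> e1 e2; have -> : g' = g by apply: funext => w; rewrite e1.
by have -> : h' = h by apply: funext => w; rewrite e2.
Qed.

Lemma Mt_cst a : Mt (fun _ => a) (fun _ => a).
Proof. by split; rewrite ?Rintc //; exact: cgood_cst. Qed.

Lemma Mt_add g h g' h' : Mt g h -> Mt g' h' -> Mt (fun w => g w + g' w) (fun y => h y + h' y).
Proof.
move=> [[g1 g2] [h1 h2] e1 e2] [[g1' g2'] [h1' h2'] e1' e2'].
split; try exact: cgoodD; try by split.
  by under eq_fun do rewrite raddfD /=; rewrite RintD // e1 e1'
    -RintD //; under [in RHS]eq_fun do rewrite raddfD.
by under eq_fun do rewrite raddfD /=; rewrite RintD // e2 e2'
    -RintD //; under [in RHS]eq_fun do rewrite raddfD.
Qed.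

Lemma Mt_scale c g h : Mt g h -> Mt (fun w => c * g w) (fun y => c * h y).
Proof.
move=> [[g1 g2] [h1 h2] e1 e2].
split; try (apply: cgoodM => //; exact: cgood_cst); try by split.
  under eq_fun do rewrite ReM; rewrite RintB; try (apply: rgoodM => //; exact: rgood_cst).
  rewrite !RintZ // e1 e2 -!RintZ // -RintB; try (apply: rgoodM => //; exact: rgood_cst).
  by under [in RHS]eq_fun do rewrite ReM.
under eq_fun do rewrite ImM; rewrite RintD; try (apply: rgoodM => //; exact: rgood_cst).
rewrite !RintZ // e1 e2 -!RintZ // -RintD; try (apply: rgoodM => //; exact: rgood_cst).
by under [in RHS]eq_fun do rewrite ImM.
Qed.

Lemma Mt_sum (I : Type) (s : seq I) (g : I -> T -> C) (h : I -> T' -> C) :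
  (forall i, Mt (g i) (h i)) ->
  Mt (fun w => \sum_(i <- s) g i w) (fun y => \sum_(i <- s) h i y).
Proof.
move=> H; elim: s => [|x s IH].
  apply: (Mt_eq _ _ (Mt_cst 0)) => w; by rewrite big_nil.
apply: (Mt_eq _ _ (Mt_add (H x) IH)) => w; by rewrite big_cons.
Qed.

Lemma Mt_sumMl (I : Type) (s : seq I) (g : I -> T -> C) (h : I -> T' -> C) X Y :
  (forall i, Mt (fun w => g i w * X w) (fun y => h i y * Y y)) ->
  Mt (fun w => (\sum_(i <- s) g i w) * X w) (fun y => (\sum_(i <- s) h i y) * Y y).
Proof.
move=> H; apply: (Mt_eq _ _ (Mt_sum s H)) => w; by rewrite big_distrl.
Qed.

Lemma Mt_sumMr (I : Type) (s : seq I) (g : I -> T -> C) (h : I -> T' -> C) X Y :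
  (forall i, Mt (fun w => X w * g i w) (fun y => Y y * h i y)) ->
  Mt (fun w => X w * (\sum_(i <- s) g i w)) (fun y => Y y * (\sum_(i <- s) h i y)).
Proof.
move=> H; apply: (Mt_eq _ _ (Mt_sum s H)) => w; by rewrite big_distrr.
Qed.
End Mt2.
Section Alg.
Variable R : realType.
Local Notation C := R[i].
Variable d : nat.

Lemma mxdagE m n (A : 'M[C]_(m, n)) i j : mxdag A i j = conjc (A j i).
Proof. by rewrite !mxE. Qed.

Lemma mxdagM m n p (A : 'M[C]_(m, n)) (B : 'M[C]_(n, p)) :
  mxdag (A *m B) = mxdag B *m mxdag A.
Proof. by rewrite /mxdag map_mxM trmx_mul. Qed.

Definition rho (psi : 'cV[C]_d) : 'M[C]_d := psi *m mxdag psi.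

Lemma rhoE psi a b : rho psi a b = psi a 0 * conjc (psi b 0).
Proof. by rewrite /rho mxE big_ord1 !mxE. Qed.

Lemma conj_rho psi a b : conjc (rho psi a b) = rho psi b a.
Proof. by rewrite !rhoE rmorphM /= conjcK mulrC. Qed.

Lemma G2E (U : 'M[C]_d) (z : 'cV[C]_d) :
  U ^t 2 *m ((z *m mxdag z) *t (z *m mxdag z)) *m (mxdag U) ^t 2
  = rho (U *m z) *t rho (U *m z).
Proof.
rewrite !ntensmx2 !tensmx_mul.
by have -> : U *m (z *m mxdag z) *m mxdag U = rho (U *m z) by rewrite /rho mxdagM !mulmxA.
Qed.

Lemma G4E (U : 'M[C]_d) (z : 'cV[C]_d) :
  U ^t 4 *m ((z *m mxdag z) *t ((z *m mxdag z) *t ((z *m mxdag z) *t (z *m mxdag z))))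
    *m (mxdag U) ^t 4
  = rho (U *m z) *t (rho (U *m z) *t (rho (U *m z) *t rho (U *m z))).
Proof.
rewrite !ntensmxSS !ntensmx1 !tensmx_mul.
by have -> : U *m (z *m mxdag z) *m mxdag U = rho (U *m z) by rewrite /rho mxdagM !mulmxA.
Qed.

Variables (K : nat) (A : 'I_K -> 'M[C]_d).

Definition ak (k : 'I_K) (r : 'M[C]_d) := \sum_(p < d) \sum_(q < d) A k p q * r q p.
Definition bk (k : 'I_K) (r : 'M[C]_d) := \sum_(p < d) \sum_(q < d) conjc (A k q p) * r q p.
Definition Sfun (r : 'M[C]_d) := \sum_(k < K) ak k r * bk k r.

Lemma fE_S (E : 'M[C]_d -> 'M[C]_d) :
  (forall r, E r = \sum_(k < K) (A k *m r *m mxdag (A k))) ->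
  forall psi, fE E psi = complex.Re (Sfun (rho psi)).
Proof.
move=> hK psi; rewrite /fE hK mulmx_sumr mulmx_suml summxE /Sfun.
congr complex.Re; apply: eq_bigr => k _.
have -> : mxdag psi *m (A k *m (psi *m mxdag psi) *m mxdag (A k)) *m psi =
  (mxdag psi *m A k *m psi) *m (mxdag psi *m mxdag (A k) *m psi) by rewrite !mulmxA.
rewrite mxE big_ord1; congr (_ * _).
  rewrite mxE; under eq_bigr do rewrite mxE big_distrl /=.
  rewrite exchange_big /=; apply: eq_bigr => p _; apply: eq_bigr => q _.
  rewrite rhoE !mxE. ring.
rewrite mxE; under eq_bigr do rewrite mxE big_distrl /=.
rewrite exchange_big /=; apply: eq_bigr => p _; apply: eq_bigr => q _.
rewrite rhoE !mxE. ring.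
Qed.

Lemma bk_conj k psi : bk k (rho psi) = conjc (ak k (rho psi)).
Proof.
rewrite /bk /ak rmorph_sum /= exchange_big /=; apply: eq_bigr => p _.
rewrite rmorph_sum /=; apply: eq_bigr => q _.
by rewrite rmorphM /= conj_rho.
Qed.

Lemma S_real psi : complex.Im (Sfun (rho psi)) = 0.
Proof.
rewrite /Sfun raddf_sum /=; apply: big1 => k _.
by rewrite bk_conj; case: (ak k _) => a b /=; rewrite mulrN mulrC addNr.
Qed.

Lemma fE_sq (E : 'M[C]_d -> 'M[C]_d) :
  (forall r, E r = \sum_(k < K) (A k *m r *m mxdag (A k))) ->
  forall psi, fE E psi ^+ 2 = complex.Re (Sfun (rho psi) * Sfun (rho psi)).
Proof.
move=> hK psi; rewrite ReM S_real (fE_S hK) mulr0 subr0; exact: expr2.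
Qed.

Lemma S_expand r : Sfun r =
  \sum_(k < K) \sum_(p < d) \sum_(q < d) \sum_(p' < d) \sum_(q' < d)
     (A k p q * conjc (A k q' p')) * (r q p * r q' p').
Proof.
apply: eq_bigr => k _; rewrite /ak /bk big_distrl; apply: eq_bigr => p _.
rewrite big_distrl; apply: eq_bigr => q _; rewrite big_distrr; apply: eq_bigr => p' _.
rewrite big_distrr; apply: eq_bigr => q' _ /=.
by rewrite mulrACA.
Qed.
End Alg.
Section Design.
Variable R : realType.
Local Notation C := R[i].
Variable d : nat.
Variable z : 'cV[C]_d.

Lemma cgood_entries {dT : measure_display} {T : measurableType dT} (Y : T -> 'M[C]_d) :
  (forall w, Y w \is unitarymx) -> rmeas Y -> forall p q, cgood (fun w => Y w p q).
Proof.
move=> hU hm p q; have [m1 m2] := rmeas_entry hm p q.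
split; split => //; exists 1 => w; by have [] := unitary_entry_bound (hU w) p q.
Qed.

Lemma cgood_rho {dT : measure_display} {T : measurableType dT} (Y : T -> 'M[C]_d) :
  (forall w, Y w \is unitarymx) -> rmeas Y -> forall a b, cgood (fun w => rho (Y w *m z) a b).
Proof.
move=> hU hm a b.
have hpsi c : cgood (fun w => (Y w *m z) c 0).
  under eq_fun do rewrite mxE.
  apply: cgood_sum => j; apply: cgoodM; [exact: cgood_entries | exact: cgood_cst].
under eq_fun do rewrite rhoE.
apply: cgoodM => //; exact: cgoodJ.
Qed.

Context {dT : measure_display} {T : measurableType dT} (P : probability T R).
Context {dT' : measure_display} {T' : measurableType dT'} (Q : probability T' R).
Variables (V : T -> 'M[C]_d) (W : T' -> 'M[C]_d).
Hypotheses (hVU : forall w, V w \is unitarymx) (hVm : rmeas V).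
Hypotheses (hWU : forall w, W w \is unitarymx) (hWm : rmeas W).
Hypothesis hD : unitary_design 4 P Q V W.

Let Pz := z *m mxdag z.

Lemma Mt_G2 a b a' b' :
  Mt P Q (fun w => rho (V w *m z) a b * rho (V w *m z) a' b')
         (fun y => rho (W y *m z) a b * rho (W y *m z) a' b').
Proof.
have [h1 h2] := hD (k := 2) isT (Pz *t Pz) (mxtens_index (a, a')) (mxtens_index (b, b')).
have e1 := congr1 fine h1; have e2 := congr1 fine h2.
rewrite /Pz in e1 e2.
have G (U : 'M[C]_d) : (U ^t 2 *m ((z *m mxdag z) *t (z *m mxdag z)) *m (mxdag U) ^t 2)
   (mxtens_index (a, a')) (mxtens_index (b, b')) = rho (U *m z) a b * rho (U *m z) a' b'.
  by rewrite G2E tensmxE.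
split.
- apply: cgoodM; exact: cgood_rho.
- apply: cgoodM; exact: cgood_rho.
- move: e1; rewrite /Rintegral; under eq_fun do rewrite G.
  by under [in X in _ = X -> _]eq_fun do rewrite G.
- move: e2; rewrite /Rintegral; under eq_fun do rewrite G.
  by under [in X in _ = X -> _]eq_fun do rewrite G.
Qed.

Lemma Mt_G4 a1 b1 a2 b2 a3 b3 a4 b4 :
  Mt P Q (fun w => (rho (V w *m z) a1 b1 * rho (V w *m z) a2 b2) *
                   (rho (V w *m z) a3 b3 * rho (V w *m z) a4 b4))
         (fun y => (rho (W y *m z) a1 b1 * rho (W y *m z) a2 b2) *
                   (rho (W y *m z) a3 b3 * rho (W y *m z) a4 b4)).
Proof.
have [h1 h2] := hD (k := 4) isT (Pz *t (Pz *t (Pz *t Pz)))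
  (mxtens_index (a1, mxtens_index (a2, mxtens_index (a3, a4))))
  (mxtens_index (b1, mxtens_index (b2, mxtens_index (b3, b4)))).
have e1 := congr1 fine h1; have e2 := congr1 fine h2.
rewrite /Pz in e1 e2.
have G (U : 'M[C]_d) : (U ^t 4 *m ((z *m mxdag z) *t ((z *m mxdag z) *t ((z *m mxdag z) *t (z *m mxdag z)))) *m (mxdag U) ^t 4)
  (mxtens_index (a1, mxtens_index (a2, mxtens_index (a3, a4))))
  (mxtens_index (b1, mxtens_index (b2, mxtens_index (b3, b4)))) =
  (rho (U *m z) a1 b1 * rho (U *m z) a2 b2) * (rho (U *m z) a3 b3 * rho (U *m z) a4 b4).
  by rewrite G4E !tensmxE !mulrA.
split.
- by apply: cgoodM; apply: cgoodM; exact: cgood_rho.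
- by apply: cgoodM; apply: cgoodM; exact: cgood_rho.
- move: e1; rewrite /Rintegral; under eq_fun do rewrite G.
  by under [in X in _ = X -> _]eq_fun do rewrite G.
- move: e2; rewrite /Rintegral; under eq_fun do rewrite G.
  by under [in X in _ = X -> _]eq_fun do rewrite G.
Qed.
End Design.
Section Design2.
Variable R : realType.
Local Notation C := R[i].
Variable d : nat.
Variable z : 'cV[C]_d.
Context {dT : measure_display} {T : measurableType dT} (P : probability T R).
Context {dT' : measure_display} {T' : measurableType dT'} (Q : probability T' R).
Variables (V : T -> 'M[C]_d) (W : T' -> 'M[C]_d).
Hypotheses (hVU : forall w, V w \is unitarymx) (hVm : rmeas V).
Hypotheses (hWU : forall w, W w \is unitarymx) (hWm : rmeas W).
Hypothesis hD : unitary_design 4 P Q V W.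
Variables (K : nat) (A : 'I_K -> 'M[C]_d).

Lemma Mt_S : Mt P Q (fun w => Sfun A (rho (V w *m z))) (fun y => Sfun A (rho (W y *m z))).
Proof.
apply: (Mt_eq (fun w => esym (S_expand A _)) (fun w => esym (S_expand A _))).
apply: Mt_sum => k; apply: Mt_sum => p; apply: Mt_sum => q; apply: Mt_sum => p'.
apply: Mt_sum => q'; apply: Mt_scale; exact: Mt_G2.
Qed.

Lemma Mt_SS : Mt P Q (fun w => Sfun A (rho (V w *m z)) * Sfun A (rho (V w *m z)))
                     (fun y => Sfun A (rho (W y *m z)) * Sfun A (rho (W y *m z))).
Proof.
apply: (Mt_eq (fun w => esym (congr1 (fun x => x * Sfun A (rho (V w *m z))) (S_expand A _)))
              (fun w => esym (congr1 (fun x => x * Sfun A (rho (W w *m z))) (S_expand A _)))).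
apply: Mt_sumMl => k; apply: Mt_sumMl => p; apply: Mt_sumMl => q; apply: Mt_sumMl => p'.
apply: Mt_sumMl => q'.
apply: (Mt_eq (fun w => esym (congr1 (fun x => _ * x) (S_expand A _)))
              (fun w => esym (congr1 (fun x => _ * x) (S_expand A _)))).
apply: Mt_sumMr => k2; apply: Mt_sumMr => p2; apply: Mt_sumMr => q2; apply: Mt_sumMr => p2'.
apply: Mt_sumMr => q2'.
set c1 := A k p q * _; set c2 := A k2 p2 q2 * _.
apply: (Mt_eq (g := fun w => (c1 * c2) * ((rho (V w *m z) q p * rho (V w *m z) q' p') *
                   (rho (V w *m z) q2 p2 * rho (V w *m z) q2' p2')))
              (h := fun w => (c1 * c2) * ((rho (W w *m z) q p * rho (W w *m z) q' p') *
                   (rho (W w *m z) q2 p2 * rho (W w *m z) q2' p2')))).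
- by move=> w; rewrite mulrACA.
- by move=> w; rewrite mulrACA.
apply: Mt_scale; exact: Mt_G4.
Qed.
End Design2.
Section Bern.
Variable R : realType.
Variable N : nat.

Definition pfx (x : {ffun 'I_N -> bool}) (g : 'I_N -> R) : R :=
  \prod_(t < N) (if x t then g t else 1 - g t).

Lemma sum_selS (S : pred 'I_N) (g : 'I_N -> R) :
  \sum_(x : {ffun 'I_N -> bool}) (\prod_(u in S) ((x u : nat)%:R : R)) * pfx x g =
  \prod_(u in S) g u.
Proof.
pose F u (b : bool) : R := (if u \in S then (b : nat)%:R else 1) * (if b then g u else 1 - g u).
have E1 : \prod_(u < N) \sum_(b : bool) F u b =
    \sum_(x : {ffun 'I_N -> bool}) \prod_(u < N) F u (x u) by exact: bigA_distr_bigA.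
have E2 : \prod_(u < N) \sum_(b : bool) F u b = \prod_(u in S) g u.
  rewrite [RHS]big_mkcond /=; apply: eq_bigr => u _.
  rewrite big_bool /F; case: (u \in S) => /=; rewrite ?mul1r ?mul0r ?addr0 //.
  by rewrite subrKC.
rewrite -E2 E1; apply: eq_bigr => x _.
rewrite /pfx big_split /= -big_mkcond /=; congr (_ * _).
Qed.

Lemma sum_sel1 (g : 'I_N -> R) s :
  \sum_(x : {ffun 'I_N -> bool}) ((x s : nat)%:R : R) * pfx x g = g s.
Proof.
have := sum_selS (pred1 s) g; rewrite big_pred1_eq => <-.
by apply: eq_bigr => x _; rewrite big_pred1_eq.
Qed.

Lemma prod_pred2 (h : 'I_N -> R) s t : s != t ->
  \prod_(u in [pred u | (u == s) || (u == t)]) h u = h s * h t.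
Proof.
move=> st; rewrite (bigD1 s) /=; last by rewrite !inE eqxx.
rewrite (bigD1 t) /=; last by rewrite !inE eqxx orbT eq_sym.
rewrite big1 ?mulr1 // => u; rewrite !inE.
by case/andP => /andP[/orP[] -> ]; rewrite ?andbF.
Qed.

Lemma sum_sel2 (g : 'I_N -> R) s t : s != t ->
  \sum_(x : {ffun 'I_N -> bool}) (((x s : nat)%:R : R) * (x t : nat)%:R) * pfx x g = g s * g t.
Proof.
move=> st; have := sum_selS [pred u | (u == s) || (u == t)] g.
rewrite prod_pred2 // => <-.
by apply: eq_bigr => x _; rewrite prod_pred2.
Qed.
End Bern.
Section Prob.
Variable R : realType.
Context {dT : measure_display} {T : measurableType dT} (P : probability T R).
Variable N : nat.
Variables (Xi : 'I_N -> T -> bool) (f : T -> R) (Gs : set (set T)).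
Hypotheses (hXm : forall s, measurable (Xi s @^-1` [set true]))
  (hX : cond_iid_bernoulli P Gs f Xi) (hGT : Gs setT) (hf : rgood f).

Definition Yv s w : R := ((Xi s w : nat)%:R).

Lemma Y_indic s w : Yv s w = \1_(Xi s @^-1` [set true]) w.
Proof.
rewrite indicE /Yv; case: (boolP (Xi s w)) => h.
  by rewrite mem_set.
by rewrite memNset //= => /eqP; rewrite (negbTE h).
Qed.

Lemma rgoodY s : rgood (Yv s).
Proof.
split.
  have := @measurable_realfun.measurable_indic _ T R setT _ (hXm s).
  by apply: eq_measurable_fun => w _; rewrite Y_indic.
by exists 1 => w; rewrite /Yv; case: (Xi s w); rewrite ?normr1 ?normr0.
Qed.

Definition ev (x : {ffun 'I_N -> bool}) := [set w | forall s, Xi s w = x s].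

Lemma ev_meas x : measurable (ev x).
Proof.
have -> : ev x = \bigcap_(s in [set: 'I_N]) [set w | Xi s w = x s].
  apply/seteqP; split => w H s; [move=> _; exact: H | exact: H].
apply: fin_bigcap_measurable; first exact: finite_finset.
move=> s _; case: (x s).
  exact: hXm.
have -> : [set w | Xi s w = false] = ~` (Xi s @^-1` [set true]).
  by apply/seteqP; split => w /=; case: (Xi s w).
exact: measurableC.
Qed.

Lemma pfx_indic x w : pfx x (fun t => Yv t w) = \1_(ev x) w.
Proof.
rewrite indicE /pfx /Yv; case: (boolP [forall t, Xi t w == x t]) => H.
  rewrite mem_set; last by move=> s; move/forallP: H => /(_ s) /eqP.
  apply: big1 => t _; move/forallP: H => /(_ t) /eqP ->.
  by case: (x t); rewrite ?subr0.
move/forallPn: H => [t ht].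
rewrite memNset; last by move/(_ t) => /eqP; rewrite (negbTE ht).
rewrite (bigD1 t) //=; move: ht.
by case: (x t); case: (Xi t w) => //= _; rewrite ?subrr mul0r.
Qed.

Lemma RintI x : Rintegral P setT (fun w => pfx x (fun t => Yv t w)) =
                Rintegral P setT (fun w => pfx x (fun _ => f w)).
Proof.
have -> : Rintegral P setT (fun w => pfx x (fun t => Yv t w)) =
          Rintegral P setT (\1_(ev x)).
  by apply: eq_Rintegral => w _; rewrite pfx_indic.
rewrite /Rintegral integral_indic //; last exact: ev_meas.
rewrite setIT -[ev x]setTI /ev; exact: (congr1 fine (hX hGT x)).
Qed.

Lemma rgood_pfx x (g : 'I_N -> T -> R) : (forall t, rgood (g t)) ->
  rgood (fun w => pfx x (fun t => g t w)).
Proof.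
move=> H; apply: rgood_prod => t.
by case: (x t) => //; apply: rgoodB => //; exact: rgood_cst.
Qed.

Lemma EY1 s : Rintegral P setT (Yv s) = Rintegral P setT f.
Proof.
transitivity (Rintegral P setT (fun w => \sum_(x : {ffun 'I_N -> bool})
                 ((x s : nat)%:R : R) * pfx x (fun t => Yv t w))).
  by apply: eq_Rintegral => w _; rewrite sum_sel1.
rewrite Rint_sum; last first.
  by move=> x; apply: rgoodM; [exact: rgood_cst | apply: rgood_pfx => t; exact: rgoodY].
transitivity (Rintegral P setT (fun w => \sum_(x : {ffun 'I_N -> bool})
                 ((x s : nat)%:R : R) * pfx x (fun _ => f w))); last first.
  by apply: eq_Rintegral => w _; rewrite sum_sel1.
rewrite Rint_sum; last first.
  by move=> x; apply: rgoodM; [exact: rgood_cst | apply: rgood_pfx].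
apply: eq_bigr => x _; rewrite !RintZ ?RintI //.
  by apply: rgood_pfx.
by apply: rgood_pfx => t; exact: rgoodY.
Qed.

Lemma EY2 s t : s != t -> Rintegral P setT (fun w => Yv s w * Yv t w) =
   Rintegral P setT (fun w => f w * f w).
Proof.
move=> st.
transitivity (Rintegral P setT (fun w => \sum_(x : {ffun 'I_N -> bool})
                 (((x s : nat)%:R : R) * (x t : nat)%:R) * pfx x (fun t => Yv t w))).
  by apply: eq_Rintegral => w _; rewrite (sum_sel2 _ st).
rewrite Rint_sum; last first.
  by move=> x; apply: rgoodM; [exact: rgood_cst | apply: rgood_pfx => u; exact: rgoodY].
transitivity (Rintegral P setT (fun w => \sum_(x : {ffun 'I_N -> bool})
                 (((x s : nat)%:R : R) * (x t : nat)%:R) * pfx x (fun _ => f w))); last first.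
  by apply: eq_Rintegral => w _; rewrite (sum_sel2 _ st).
rewrite Rint_sum; last first.
  by move=> x; apply: rgoodM; [exact: rgood_cst | apply: rgood_pfx].
apply: eq_bigr => x _; rewrite !RintZ ?RintI //.
  by apply: rgood_pfx.
by apply: rgood_pfx => u; exact: rgoodY.
Qed.
End Prob.
Section Fin.
Variable R : realType.
Context {dT : measure_display} {T : measurableType dT} (P : probability T R).

Lemma Pfin (S : set T) : measurable S -> P S \is a fin_num.
Proof.
move=> mS; apply: fin_real; apply/andP; split.
  by apply: (lt_le_trans _ (measure_ge0 P S)); exact: ltNy0.
by apply: (le_lt_trans (probability_le1 P mS)); exact: ltry.
Qed.

Lemma Rint_indic (S : set T) : measurable S -> Rintegral P setT (\1_S) = fine (P S).
Proof. by move=> mS; rewrite /Rintegral integral_indic // setIT. Qed.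

Lemma rgood_indic (S : set T) : measurable S -> rgood (\1_S : T -> R).
Proof.
move=> mS; split; first exact: measurable_realfun.measurable_indic.
by exists 1 => w; rewrite indicE; case: (w \in S); rewrite ?normr1 ?normr0.
Qed.

Lemma indep2 (I : finType) (G : I -> set (set T)) :
  mutually_independent P G -> (forall k, G k setT) ->
  forall i j A B, i != j -> G i A -> G j B -> P (A `&` B) = (P A * P B)%E.
Proof.
move=> hind hT i j A B ij hA hB.
pose Af k := if k == i then A else if k == j then B else setT.
have hAf : forall k, G k (Af k).
  by move=> k; rewrite /Af; case: eqP => [->//|_]; case: eqP => [->//|_].
have := hind Af hAf.
have -> : \bigcap_(k in [set: I]) Af k = A `&` B.
  apply/seteqP; split => w.
    move=> H; split.
      by have := H i Logic.I; rewrite /Af eqxx.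
    by have := H j Logic.I; rewrite /Af eq_sym (negbTE ij) eqxx.
  move=> [wA wB] k _; rewrite /Af; case: eqP => // _; case: eqP => //.
move=> ->; rewrite (bigD1 i) //= (bigD1 j) /=; last by rewrite eq_sym.
rewrite big1 ?mule1; last first.
  move=> k /andP[ki kj]; rewrite /Af (negbTE ki) (negbTE kj).
  exact: probability_setT.
by rewrite /Af eqxx eq_sym (negbTE ij) eqxx.
Qed.

Lemma cheb (g : T -> R) (a eps : R) : rgood g -> 0 < eps ->
  measurable [set w | eps <= `|g w - a|] /\
  eps ^+ 2 * fine (P [set w | eps <= `|g w - a|]) <=
     Rintegral P setT (fun w => (g w - a) ^+ 2).
Proof.
move=> hg e0.
have hh : rgood (fun w => g w - a) by apply: rgoodB => //; exact: rgood_cst.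
have mB : measurable [set w | eps <= `|g w - a|].
  have mh : measurable_fun setT (fun w => `|g w - a|).
    apply: measurableT_comp; first exact: measurable_realfun.normr_measurable.
    exact: hh.1.
  have := mh measurableT `[eps, +oo[%classic (measurable_itv _).
  rewrite setTI; congr measurable; apply/seteqP; split => w /=;
    by rewrite in_itv /= andbT.
split => //.
rewrite -Rint_indic // -RintZ; last exact: rgood_indic.
apply: le_Rintegral => //.
- apply: rgood_int; apply: rgoodM; [exact: rgood_cst | exact: rgood_indic].
- by apply: rgood_int; rewrite /=; under eq_fun do rewrite expr2; exact: rgoodM.
move=> w _; rewrite indicE; case: (boolP (w \in _)) => H.
  rewrite mulr1; move: H; rewrite in_setE /= => H.
  rewrite -(real_normK (num_real (g w - a))).
  by rewrite !expr2; apply: ler_pM => //; exact: ltW.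
by rewrite mulr0 sqr_ge0.
Qed.
End Fin.
Section Cov.
Variable R : realType.
Context {dT : measure_display} {T : measurableType dT} (P : probability T R).

Lemma Rint_cov (u v : T -> R) (c : R) : rgood u -> rgood v ->
  Rintegral P setT (fun w => (u w - c) * (v w - c)) =
  Rintegral P setT (fun w => u w * v w) - c * Rintegral P setT u
    - c * Rintegral P setT v + c * c.
Proof.
move=> hu hv.
have e : forall w, (u w - c) * (v w - c) = ((u w * v w - c * u w) - c * v w) + c * c.
  by move=> w; ring.
have gc : rgood (fun _ : T => c) by exact: rgood_cst.
have g1 : rgood (fun w => u w * v w) by exact: rgoodM.
have g2 : rgood (fun w => c * u w) by exact: rgoodM.
have g3 : rgood (fun w => c * v w) by exact: rgoodM.
under eq_fun do rewrite e.
rewrite RintD; last exact: rgood_cst.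
  rewrite RintB //; last exact: rgoodB.
  by rewrite RintB // !RintZ // Rintc.
by apply: rgoodB => //; exact: rgoodB.
Qed.
End Cov.

Section MeasLt.
Variable R : realType.
Context {dT : measure_display} {T : measurableType dT}.
Lemma meas_lt (g : T -> R) (a eps : R) : rgood g ->
  measurable [set w | eps < `|g w - a|].
Proof.
move=> hg.
have hh : rgood (fun w => g w - a) by apply: rgoodB => //; exact: rgood_cst.
have mh : measurable_fun setT (fun w => `|g w - a|).
  apply: measurableT_comp; first exact: measurable_realfun.normr_measurable.
  exact: hh.1.
have := mh measurableT `]eps, +oo[%classic (measurable_itv _).
rewrite setTI; congr measurable; apply/seteqP; split => w /=;
  by rewrite in_itv /= andbT.
Qed.
End MeasLt.

Unset Implicit Arguments.
Set Strict Implicit.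

Theorem corollary1
  (R : realType) (d : nat)
  (E : 'M[R[i]]_d -> 'M[R[i]]_d) (hE : is_channel E)
  (z0 : 'cV[R[i]]_d) (hz0 : unit_vector z0)
  (M N : nat) (hM : (2 <= M)%N) (hN : (2 <= N)%N)
  (* Haar reference: W is Haar distributed on U(d) under Q *)
  (dQ : measure_display) (T' : measurableType dQ) (Q : probability T' R)
  (W : T' -> 'M[R[i]]_d) (hW : haar_rv Q W)
  (* the experiment *)
  (dP : measure_display) (T : measurableType dP) (P : probability T R)
  (V : 'I_M -> T -> 'M[R[i]]_d) (X : 'I_M -> 'I_N -> T -> bool)
  (hVU : forall i w, V i w \is unitarymx)
  (hVm : forall i, rmeas (V i))
  (hVid : forall i j, same_law P (V i) (V j))
  (hV4 : forall i, unitary_design 4 P Q (V i) W)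
  (hXm : forall i s, measurable (X i s @^-1` [set true]))
  (hind : mutually_independent P (fun i : 'I_M =>
            <<s sigmaY (V i) `|` [set X i s @^-1` [set true] | s in [set: 'I_N]] >>))
  (hX : forall i, cond_iid_bernoulli P (sigmaY (fun w => V i w *m z0))
                    (fun w => fE E (V i w *m z0)) (X i)) :
  let F := Rintegral Q setT (fun y => fE E (W y *m z0)) in
  let D2 := Rintegral Q setT (fun y => fE E (W y *m z0) ^+ 2) - F ^+ 2 in
  let Fhat := fun w => (M%:R * N%:R)^-1 *
                 \sum_(i < M) \sum_(s < N) ((X i s w : nat)%:R : R) in
  (forall eps : R, 0 < eps ->
     (P [set w | (eps <= `|Fhat w - F|)%R] <=
        (D2 / (M%:R * eps ^+ 2) + 1 / (4 * M%:R * N%:R * eps ^+ 2))%:E)%E) /\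
  (forall eps delta : R, 0 < eps -> 0 < delta < 1 ->
     D2 / M%:R + 1 / (4 * M%:R * N%:R) <= delta * eps ^+ 2 ->
     ((1 - delta)%:E <= P [set w | (`|Fhat w - F| <= eps)%R])%E).
Proof.
move=> F D2 Fhat.
have [K [A [hK _]]] := hE.
have [hWU [hWm _]] := hW.
pose Q2 := Rintegral Q setT (fun y => fE E (W y *m z0) ^+ 2).
have D2E : D2 = Q2 - F ^+ 2 by [].
have hMS i : Mt P Q (fun w => Sfun A (rho (V i w *m z0))) (fun y => Sfun A (rho (W y *m z0))).
  exact: (Mt_S z0 (hVU i) (hVm i) hWU hWm (hV4 i) A).
have hMSS i : Mt P Q (fun w => Sfun A (rho (V i w *m z0)) * Sfun A (rho (V i w *m z0)))
                     (fun y => Sfun A (rho (W y *m z0)) * Sfun A (rho (W y *m z0))).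
  exact: (Mt_SS z0 (hVU i) (hVm i) hWU hWm (hV4 i) A).
pose f i w := fE E (V i w *m z0).
have rgf i : rgood (f i).
  have [[h1 _] _ _ _] := hMS i.
  by rewrite /f; under eq_fun do rewrite (fE_S hK).
have Ef i : Rintegral P setT (f i) = F.
  have [_ _ e1 _] := hMS i.
  rewrite /f /F; under eq_Rintegral do rewrite (fE_S hK).
  by rewrite e1; under [RHS]eq_Rintegral do rewrite (fE_S hK).
have Ef2 i : Rintegral P setT (fun w => f i w * f i w) = Q2.
  have [_ _ e1 _] := hMSS i.
  rewrite /f /Q2; under eq_Rintegral do rewrite -expr2 (fE_sq hK).
  by rewrite e1; under [RHS]eq_Rintegral do rewrite (fE_sq hK).
have hGT i : sigmaY (fun w => V i w *m z0) setT.
  exists setT; last by rewrite preimage_setT.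
  by apply: sub_sigma_algebra; exact: openT.
pose Y i := Yv R (X i).
have rgY i s : rgood (Y i s) by apply: rgoodY; exact: hXm.
have EY i s : Rintegral P setT (Y i s) = F.
  by rewrite /Y (EY1 (hXm i) (hX i) (hGT i) (rgf i)) Ef.
have EYY i s t : s != t -> Rintegral P setT (fun w => Y i s w * Y i t w) = Q2.
  by move=> st; rewrite /Y (EY2 (hXm i) (hX i) (hGT i) (rgf i) st) Ef2.
have YY i s w : Y i s w * Y i s w = Y i s w.
  by rewrite /Y /Yv; case: (X i s w); rewrite ?mulr1 ?mulr0.
pose G := fun i : 'I_M =>
            <<s sigmaY (V i) `|` [set X i s @^-1` [set true] | s in [set: 'I_N]] >>.
have hGk k : G k setT.
  apply: sub_sigma_algebra; left; exists setT; last by rewrite preimage_setT.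
  by apply: sub_sigma_algebra; exact: openT.
have hGA i s : G i (X i s @^-1` [set true]).
  by apply: sub_sigma_algebra; right; exists s.
have memXb (b : T -> bool) w : (w \in b @^-1` [set true]) = b w.
  case: (boolP (b w)) => h; first by rewrite mem_set.
  by rewrite memNset //= => /eqP; rewrite (negbTE h).
have EYind i j s t : i != j -> Rintegral P setT (fun w => Y i s w * Y j t w) = F * F.
  move=> ij.
  have mA := hXm i s; have mB := hXm j t.
  transitivity (Rintegral P setT (\1_(X i s @^-1` [set true] `&` X j t @^-1` [set true]))).
    apply: eq_Rintegral => w _; rewrite /Y !Y_indic !indicE in_setI.
    by case: (w \in _); case: (w \in _); rewrite ?mulr1 ?mulr0.
  rewrite Rint_indic; last exact: measurableI.
  rewrite (indep2 hind hGk ij (hGA i s) (hGA j t)) fineM ?Pfin //.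
  rewrite -!Rint_indic //; congr (_ * _); [rewrite -(EY i s) | rewrite -(EY j t)];
    by apply: eq_Rintegral => w _; rewrite memXb.
pose kap (i j : 'I_M) (s t : 'I_N) : R :=
  if i == j then (if t == s then F - F ^+ 2 else D2) else 0.
have cov i s j t : Rintegral P setT (fun w => (Y i s w - F) * (Y j t w - F)) = kap i j s t.
  rewrite Rint_cov // !EY /kap.
  case: eqP => [<-|/eqP ij]; last by rewrite EYind //; ring.
  case: eqP => [->|/eqP ts].
    by under eq_Rintegral do rewrite YY; rewrite EY; ring.
  rewrite EYY 1?eq_sym // D2E; ring.
pose m : R := M%:R; pose n : R := N%:R.
have m0 : 0 < m by rewrite /m ltr0n; apply: ltn_trans hM.
have n0 : 0 < n by rewrite /n ltr0n; apply: ltn_trans hN.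
pose c := (m * n)^-1.
have rgZ i s : rgood (fun w => Y i s w - F) by apply: rgoodB => //; exact: rgood_cst.
have rgF : rgood Fhat.
  rewrite /Fhat; apply: rgoodM; first exact: rgood_cst.
  apply: rgood_sum => i; apply: rgood_sum => s; exact: (rgY i s).
have FhE w : Fhat w - F = c * \sum_(i < M) \sum_(s < N) (Y i s w - F).
  have -> : Fhat w = c * \sum_(i < M) \sum_(s < N) Y i s w by [].
  under [X in _ = _ * X]eq_bigr do rewrite sumrB sumr_const card_ord.
  rewrite sumrB sumr_const card_ord mulrBr; congr (_ - _).
  rewrite -mulrnA -mulr_natr natrM -/n -/m /c [F * _]mulrC [n * m]mulrC mulKf //.
  by rewrite mulf_neq0 // gt_eqF.
have VarE : Rintegral P setT (fun w => (Fhat w - F) ^+ 2) =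
    c ^+ 2 * \sum_(i < M) \sum_(s < N) \sum_(j < M) \sum_(t < N) kap i j s t.
  transitivity (Rintegral P setT (fun w => c ^+ 2 * \sum_(i < M) \sum_(s < N)
      \sum_(j < M) \sum_(t < N) ((Y i s w - F) * (Y j t w - F)))).
    apply: eq_Rintegral => w _; rewrite FhE exprMn [X in _ * X = _]expr2; congr (_ * _).
    rewrite big_distrl; apply: eq_bigr => i _; rewrite big_distrl; apply: eq_bigr => s _.
    rewrite big_distrr; apply: eq_bigr => j _; rewrite big_distrr; apply: eq_bigr => t _.
    by [].
  rewrite RintZ; last first.
    apply: rgood_sum => i; apply: rgood_sum => s; apply: rgood_sum => j; apply: rgood_sum => t.
    exact: rgoodM.
  congr (_ * _).
  rewrite Rint_sum; last first.
    move=> i; apply: rgood_sum => s; apply: rgood_sum => j; apply: rgood_sum => t.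
    exact: rgoodM.
  apply: eq_bigr => i _; rewrite Rint_sum; last first.
    move=> s; apply: rgood_sum => j; apply: rgood_sum => t.
    exact: rgoodM.
  apply: eq_bigr => s _; rewrite Rint_sum; last first.
    move=> j; apply: rgood_sum => t.
    exact: rgoodM.
  apply: eq_bigr => j _; rewrite Rint_sum; last first.
    move=> t; exact: rgoodM.
  by apply: eq_bigr => t _; rewrite cov.
have kapS i s : \sum_(j < M) \sum_(t < N) kap i j s t = (F - F ^+ 2 - D2) + D2 * n.
  rewrite (bigD1 i) //= [X in _ + X]big1 ?addr0; last first.
    by move=> j ji; apply: big1 => t _; rewrite /kap eq_sym (negbTE ji).
  rewrite /kap eqxx.
  transitivity (\sum_(t < N) (D2 + (if t == s then F - F ^+ 2 - D2 else 0))).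
    by apply: eq_bigr => t _; case: eqP => _; [rewrite [RHS]addrC subrK | rewrite addr0].
  rewrite big_split /= sumr_const card_ord (bigD1 s) //= eqxx big1 ?addr0; last first.
    by move=> t /negbTE ->.
  by rewrite -mulr_natr addrC.
have VarV : Rintegral P setT (fun w => (Fhat w - F) ^+ 2) =
    (F - F ^+ 2 - D2 + D2 * n) / (m * n).
  rewrite VarE.
  under eq_bigr do under eq_bigr do rewrite kapS.
  rewrite !sumr_const !card_ord -mulrnA -mulr_natr natrM -/n -/m /c; field.
  by apply/andP; split; rewrite gt_eqF.
have i0 : 'I_M := Ordinal (ltnW hM).
have D2ge0 : 0 <= D2.
  have -> : D2 = Rintegral P setT (fun w => (f i0 w - F) * (f i0 w - F)).
    by rewrite Rint_cov // Ef2 Ef D2E; ring.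
  by apply: Rintegral_ge0 => w _; rewrite -expr2 sqr_ge0.
have VB : Rintegral P setT (fun w => (Fhat w - F) ^+ 2) <= D2 / m + 1 / (4 * m * n).
  rewrite VarV -subr_ge0.
  have -> : D2 / m + 1 / (4 * m * n) - (F - F ^+ 2 - D2 + D2 * n) / (m * n) =
            (D2 + (F - 2^-1) ^+ 2) / (m * n).
    field; by apply/andP; split; rewrite gt_eqF.
  apply: divr_ge0; last by apply: mulr_ge0; exact: ltW.
  by apply: addr_ge0 => //; exact: sqr_ge0.
split.
  move=> eps e0; have [mB hc] := cheb P F rgF e0.
  rewrite -(fineK (Pfin P mB)) lee_fin.
  have -> : D2 / (M%:R * eps ^+ 2) + 1 / (4 * M%:R * N%:R * eps ^+ 2) =
            (D2 / m + 1 / (4 * m * n)) / eps ^+ 2.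
    rewrite -/m -/n; field.
    by rewrite !gt_eqF ?exprn_gt0.
  rewrite ler_pdivlMr ?exprn_gt0 // mulrC; exact: le_trans hc VB.
move=> eps delta e0 /andP[d0 d1] hb.
have [mB hc] := cheb P F rgF e0.
have mC := meas_lt F eps rgF.
have -> : [set w | `|Fhat w - F| <= eps] = ~` [set w | eps < `|Fhat w - F|].
  apply/seteqP; split => w /=.
    by move=> H; rewrite ltNge H.
  by move/negP; rewrite -leNgt.
rewrite probability_setC // -(fineK (Pfin P mC)) -EFinB lee_fin.
have CB : fine (P [set w | eps < `|Fhat w - F|]) <= fine (P [set w | eps <= `|Fhat w - F|]).
  apply: fine_le; try exact: Pfin.
  apply: le_measure; rewrite ?inE //.
  by move=> w /= /ltW.
have e2 : 0 < eps ^+ 2 by exact: exprn_gt0.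
have := le_trans hc VB; rewrite -/m -/n in hb.
move: CB; set x := fine (P _); set y := fine (P _) => CB H.
have : y <= delta by nra.
lra.
Qed.
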